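(* Let $\alpha\in[0,\pi/2)$, $A\in\Pi^n_{s,\alpha}$ and $q\in\mathbb{C}$ with $|q|\le1$. Then (a) $w_q(A)\le\left(\sqrt{(1-|q|^2)(1+2\sin^2(\alpha))}+|q|\right)w(A)$, and (b) $w_q(A)\le\sqrt{1+\sin^2(\alpha)}\,w(A)$.
   Context: $M_n$ is the algebra of complex $n\times n$ matrices. $W(A)=\{\langle Ax,x\rangle:\|x\|=1\}$ and $w(A)=\sup\{|z|:z\in W(A)\}$. For $|q|\le1$, $w_q(A)=\sup\{|\langle Ax,y\rangle|: \|x\|=\|y\|=1,\ \langle x,y\rangle=q\}$. $S_\alpha=\{z:\operatorname{Re}z>0,\ |\operatorname{Im}z|\le\tan(\alpha)\operatorname{Re}z\}$ and $\Pi^n_{s,\alpha}=\{A\in M_n: W(A)\subseteq S_\alpha\}$. *)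

(* Defs.v *)
From HB Require Import structures.
From mathcomp Require Import all_boot all_order all_algebra.
From mathcomp Require Import complex.
From mathcomp Require Import all_classical all_reals.
From mathcomp Require Import trigo.
Set Implicit Arguments. Unset Strict Implicit. Unset Printing Implicit Defensive.
Import Order.TTheory GRing.Theory Num.Theory.
Local Open Scope ring_scope.
Local Open Scope classical_set_scope.

Section Defs.
Variable R : realType.
Local Notation C := R[i].

Definition cinner (n : nat) (x y : 'cV[C]_n) : C :=
  \sum_(i < n) x i ord0 * conjc (y i ord0).

Definition cabs (z : C) : R := ComplexField.Normc.normc z.

Definition unit_vec (n : nat) (x : 'cV[C]_n) : Prop := cinner x x = 1.

Definition numrange (n : nat) (A : 'M[C]_n) : set C :=
  [set z | exists x : 'cV[C]_n, unit_vec x /\ z = cinner (A *m x) x].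

Definition numradius (n : nat) (A : 'M[C]_n) : R :=
  sup [set r | exists2 z, numrange A z & r = cabs z].

Definition qnumradius (n : nat) (q : C) (A : 'M[C]_n) : R :=
  sup [set r | exists x y : 'cV[C]_n,
         [/\ unit_vec x, unit_vec y, cinner x y = q & r = cabs (cinner (A *m x) y)]].

Definition sector (alpha : R) : set C :=
  [set z | 0 < complex.Re z /\ `|complex.Im z| <= tan alpha * complex.Re z].

Definition sectorial (n : nat) (alpha : R) (A : 'M[C]_n) : Prop :=
  numrange A `<=` sector alpha.

End Defs.

(* Main.v *)
Require Import Defs.
From HB Require Import structures.
From mathcomp Require Import all_boot all_order all_algebra.
From mathcomp Require Import complex.
From mathcomp Require Import all_classical all_reals.
From mathcomp Require Import trigo.
From mathcomp Require Import ring lra.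
Import Order.TTheory GRing.Theory Num.Theory.
Set Implicit Arguments. Unset Strict Implicit.
Local Open Scope ring_scope.

Section S.
Variable R : realType.
Local Notation C := R[i].
Local Notation RE := complex.Re.
Local Notation IM := complex.Im.
Implicit Types (n : nat).

Lemma ReD (x y : C) : RE (x + y) = RE x + RE y. Proof. by case: x => ? ?; case: y. Qed.
Lemma ImD (x y : C) : IM (x + y) = IM x + IM y. Proof. by case: x => ? ?; case: y. Qed.
Lemma ReN (x : C) : RE (- x) = - RE x. Proof. by case: x. Qed.
Lemma ImN (x : C) : IM (- x) = - IM x. Proof. by case: x. Qed.
Lemma ReM (x y : C) : RE (x * y) = RE x * RE y - IM x * IM y. Proof. by case: x => ? ?; case: y. Qed.
Lemma ImM (x y : C) : IM (x * y) = RE x * IM y + IM x * RE y. Proof. by case: x => ? ?; case: y. Qed.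
Lemma ReJ (x : C) : RE (conjc x) = RE x. Proof. by case: x. Qed.
Lemma ImJ (x : C) : IM (conjc x) = - IM x. Proof. by case: x. Qed.
Lemma normE (z : C) : `|z| = (cabs z)%:C%C. Proof. by []. Qed.
Lemma cabsE (z : C) : cabs z = Num.sqrt (RE z ^+ 2 + IM z ^+ 2). Proof. by case: z. Qed.

Lemma cinnerDl n (u v w : 'cV[C]_n) : cinner (u + v) w = cinner u w + cinner v w.
Proof. by rewrite /cinner -big_split; apply: eq_bigr => i _; rewrite mxE mulrDl. Qed.
Lemma cinnerZl n a (u w : 'cV[C]_n) : cinner (a *: u) w = a * cinner u w.
Proof. by rewrite /cinner mulr_sumr; apply: eq_bigr => i _; rewrite mxE mulrA. Qed.
Lemma cinnerDr n (u v w : 'cV[C]_n) : cinner u (v + w) = cinner u v + cinner u w.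
Proof. by rewrite /cinner -big_split; apply: eq_bigr => i _; rewrite mxE rmorphD mulrDr. Qed.
Lemma cinnerZr n a (u w : 'cV[C]_n) : cinner u (a *: w) = conjc a * cinner u w.
Proof. by rewrite /cinner mulr_sumr; apply: eq_bigr => i _; rewrite mxE rmorphM /= mulrCA. Qed.
Lemma cinnerC n (u v : 'cV[C]_n) : cinner v u = conjc (cinner u v).
Proof. by rewrite /cinner rmorph_sum; apply: eq_bigr => i _; rewrite rmorphM /= conjcK mulrC. Qed.
Lemma cinner_ge0 n (u : 'cV[C]_n) : 0 <= cinner u u.
Proof. by apply: sumr_ge0 => i _; apply: mulcJ_ge0. Qed.

Lemma lin_sqrt (p q X Y : R) : p * X + q * Y <= Num.sqrt (p^+2 + q^+2) * Num.sqrt (X^+2 + Y^+2).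
Proof.
rewrite -sqrtrM ?addr_ge0 ?sqr_ge0 //.
apply: (le_trans (ler_norm _)); rewrite -sqrtr_sqr; apply: ler_wsqrtr.
have -> : (p^+2 + q^+2) * (X^+2 + Y^+2) = (p * X + q * Y)^+2 + (p * Y - q * X)^+2 by ring.
by rewrite lerDl sqr_ge0.
Qed.

Definition fA n (A : 'M[C]_n) v := cinner (A *m v) v.

Lemma fA_exp n (A : 'M[C]_n) u1 u2 g d :
  fA A (g *: u1 + d *: u2) = g * conjc g * cinner (A *m u1) u1 + g * conjc d * cinner (A *m u1) u2
    + d * conjc g * cinner (A *m u2) u1 + d * conjc d * cinner (A *m u2) u2.
Proof.
rewrite /fA mulmxDr -!scalemxAr !cinnerDl !cinnerZl !cinnerDr !cinnerZr; ring.
Qed.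

Lemma nv_exp n (u1 u2 : 'cV[C]_n) g d :
  cinner (g *: u1 + d *: u2) (g *: u1 + d *: u2) = g * conjc g * cinner u1 u1 + g * conjc d * cinner u1 u2
    + d * conjc g * conjc (cinner u1 u2) + d * conjc d * cinner u2 u2.
Proof.
rewrite !cinnerDl !cinnerZl !cinnerDr !cinnerZr [cinner u2 u1]cinnerC; ring.
Qed.

Lemma cinner_re n (u : 'cV[C]_n) : IM (cinner u u) = 0.
Proof. exact: ger0_Im (cinner_ge0 u). Qed.

Definition ReQ (g1 g2 d1 d2 a11 b11 a12 b12 a21 b21 a22 b22 : R) :=
  (g1^+2 + g2^+2) * a11 + ((g1*d1 + g2*d2) * a12 - (g2*d1 - g1*d2) * b12)
  + ((g1*d1 + g2*d2) * a21 + (g2*d1 - g1*d2) * b21) + (d1^+2 + d2^+2) * a22.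
Definition ImQ (g1 g2 d1 d2 a11 b11 a12 b12 a21 b21 a22 b22 : R) :=
  (g1^+2 + g2^+2) * b11 + ((g1*d1 + g2*d2) * b12 + (g2*d1 - g1*d2) * a12)
  + ((g1*d1 + g2*d2) * b21 - (g2*d1 - g1*d2) * a21) + (d1^+2 + d2^+2) * b22.
Definition NQ (g1 g2 d1 d2 p11 p q p22 : R) :=
  (g1^+2 + g2^+2) * p11 + 2 * ((g1*d1 + g2*d2) * p - (g2*d1 - g1*d2) * q) + (d1^+2 + d2^+2) * p22.

Lemma key_real (s c k r w p11 p q p22 a11 b11 a12 b12 a21 b21 a22 b22 : R) :
  0 < s -> 0 < r -> 0 < k -> s^+2 + c^+2 = 1 -> k^+2 = 1 + s^+2 -> r^+2 = 1 + s^+2 * c^+2 ->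
  r * ReQ k 0 0 1 a11 b11 a12 b12 a21 b21 a22 b22 + s^+2 * ImQ k 0 0 1 a11 b11 a12 b12 a21 b21 a22 b22
    <= k * w * NQ k 0 0 1 p11 p q p22 ->
  r * ReQ k 0 0 (-1) a11 b11 a12 b12 a21 b21 a22 b22 - s^+2 * ImQ k 0 0 (-1) a11 b11 a12 b12 a21 b21 a22 b22
    <= k * w * NQ k 0 0 (-1) p11 p q p22 ->
  0 <= s * ReQ (k*r) 0 1 (s*c) a11 b11 a12 b12 a21 b21 a22 b22 - c * ImQ (k*r) 0 1 (s*c) a11 b11 a12 b12 a21 b21 a22 b22 ->
  0 <= s * ReQ (k*r) 0 1 (-(s*c)) a11 b11 a12 b12 a21 b21 a22 b22 + c * ImQ (k*r) 0 1 (-(s*c)) a11 b11 a12 b12 a21 b21 a22 b22 ->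
  0 <= (1 + s^+2) * w * p11 + w * p22 + 2 * a12.
Proof.
move=> s0 r0 k0 hsc hk hr H1 H2 H3 H4.
have sr0 : 0 <= s * r by rewrite mulr_ge0 // ltW.
have := mulr_ge0 sr0 (eqbRL (subr_ge0 _ _) H1).
have := mulr_ge0 sr0 (eqbRL (subr_ge0 _ _) H2).
move: H3 H4; rewrite /ReQ /ImQ /NQ.
set X := (1 + s^+2) * w * p11 + w * p22 + 2 * a12.
move=> H3 H4 H2' H1'.
have E : 2 * k * s * r * X = 
  s * r * (k * w * ((k ^+ 2 + 0 ^+ 2) * p11 + 2 * ((k * 0 + 0 * 1) * p - (0 * 0 - k * 1) * q) + (0 ^+ 2 + 1 ^+ 2) * p22) -
         (r * ((k ^+ 2 + 0 ^+ 2) * a11 + ((k * 0 + 0 * 1) * a12 - (0 * 0 - k * 1) * b12) + ((k * 0 + 0 * 1) * a21 + (0 * 0 - k * 1) * b21) + (0 ^+ 2 + 1 ^+ 2) * a22) +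
          s ^+ 2 * ((k ^+ 2 + 0 ^+ 2) * b11 + ((k * 0 + 0 * 1) * b12 + (0 * 0 - k * 1) * a12) + ((k * 0 + 0 * 1) * b21 - (0 * 0 - k * 1) * a21) + (0 ^+ 2 + 1 ^+ 2) * b22)))
  + s * r * (k * w * ((k ^+ 2 + 0 ^+ 2) * p11 + 2 * ((k * 0 + 0 * -1) * p - (0 * 0 - k * -1) * q) + (0 ^+ 2 + (-1) ^+ 2) * p22) -
         (r * ((k ^+ 2 + 0 ^+ 2) * a11 + ((k * 0 + 0 * -1) * a12 - (0 * 0 - k * -1) * b12) + ((k * 0 + 0 * -1) * a21 + (0 * 0 - k * -1) * b21) + (0 ^+ 2 + (-1) ^+ 2) * a22) -
          s ^+ 2 * ((k ^+ 2 + 0 ^+ 2) * b11 + ((k * 0 + 0 * -1) * b12 + (0 * 0 - k * -1) * a12) + ((k * 0 + 0 * -1) * b21 - (0 * 0 - k * -1) * a21) + (0 ^+ 2 + (-1) ^+ 2) * b22)))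
  + (s * (((k*r) ^+ 2 + 0 ^+ 2) * a11 + (((k*r) * 1 + 0 * (s*c)) * a12 - (0 * 1 - (k*r) * (s*c)) * b12) + (((k*r) * 1 + 0 * (s*c)) * a21 + (0 * 1 - (k*r) * (s*c)) * b21) + (1 ^+ 2 + (s*c) ^+ 2) * a22) -
     c * (((k*r) ^+ 2 + 0 ^+ 2) * b11 + (((k*r) * 1 + 0 * (s*c)) * b12 + (0 * 1 - (k*r) * (s*c)) * a12) + (((k*r) * 1 + 0 * (s*c)) * b21 - (0 * 1 - (k*r) * (s*c)) * a21) + (1 ^+ 2 + (s*c) ^+ 2) * b22))
  + (s * (((k*r) ^+ 2 + 0 ^+ 2) * a11 + (((k*r) * 1 + 0 * -(s*c)) * a12 - (0 * 1 - (k*r) * -(s*c)) * b12) + (((k*r) * 1 + 0 * -(s*c)) * a21 + (0 * 1 - (k*r) * -(s*c)) * b21) + (1 ^+ 2 + (-(s*c)) ^+ 2) * a22) +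
     c * (((k*r) ^+ 2 + 0 ^+ 2) * b11 + (((k*r) * 1 + 0 * -(s*c)) * b12 + (0 * 1 - (k*r) * -(s*c)) * a12) + (((k*r) * 1 + 0 * -(s*c)) * b21 - (0 * 1 - (k*r) * -(s*c)) * a21) + (1 ^+ 2 + (-(s*c)) ^+ 2) * b22)).
  have hc : c^+2 = 1 - s^+2 by lra.
  have hr' : r^+2 = 1 + s^+2 * (1 - s^+2) by rewrite hr hc.
  rewrite /X; ring: hc hk hr'.
have : 0 <= 2 * k * s * r * X by rewrite E; lra.
by rewrite pmulr_rge0 // !mulr_gt0.
Qed.

Arguments ReQ : simpl never.
Arguments ImQ : simpl never.
Arguments NQ : simpl never.

Lemma ReQ_spec (F11 F12 F21 F22 g d : C) :
  RE (g * conjc g * F11 + g * conjc d * F12 + d * conjc g * F21 + d * conjc d * F22) =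
  ReQ (RE g) (IM g) (RE d) (IM d) (RE F11) (IM F11) (RE F12) (IM F12) (RE F21) (IM F21) (RE F22) (IM F22).
Proof. rewrite !(ReD, ImD, ReM, ImM, ReJ, ImJ) /ReQ; ring. Qed.

Lemma ImQ_spec (F11 F12 F21 F22 g d : C) :
  IM (g * conjc g * F11 + g * conjc d * F12 + d * conjc g * F21 + d * conjc d * F22) =
  ImQ (RE g) (IM g) (RE d) (IM d) (RE F11) (IM F11) (RE F12) (IM F12) (RE F21) (IM F21) (RE F22) (IM F22).
Proof. rewrite !(ReD, ImD, ReM, ImM, ReJ, ImJ) /ImQ; ring. Qed.

Lemma NQ_spec (P11 P12 P22 g d : C) : IM P11 = 0 -> IM P22 = 0 ->
  RE (g * conjc g * P11 + g * conjc d * P12 + d * conjc g * conjc P12 + d * conjc d * P22) =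
  NQ (RE g) (IM g) (RE d) (IM d) (RE P11) (RE P12) (IM P12) (RE P22).
Proof. move=> h1 h2; rewrite !(ReD, ImD, ReM, ImM, ReJ, ImJ) h1 h2 /NQ; ring. Qed.

Lemma key n (A : 'M[C]_n) (s c w : R) :
  0 < s -> 0 < c -> s^+2 + c^+2 = 1 ->
  (forall v, c * `|IM (fA A v)| <= s * RE (fA A v)) ->
  (forall v, cabs (fA A v) <= w * RE (cinner v v)) ->
  forall u1 u2, 0 <= (1 + s^+2) * w * RE (cinner u1 u1) + w * RE (cinner u2 u2)
                     + 2 * RE (cinner (A *m u1) u2).
Proof.
move=> s0 c0 hsc hsec hw u1 u2.
pose r := Num.sqrt (1 + s^+2 * c^+2); pose k := Num.sqrt (1 + s^+2).
have sc0 : 0 <= s^+2 * c^+2 by rewrite mulr_ge0 ?sqr_ge0.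
have r0 : 0 < r by rewrite sqrtr_gt0; lra.
have s20 : 0 <= s^+2 by rewrite sqr_ge0.
have k0 : 0 < k by rewrite sqrtr_gt0; lra.
have hr : r^+2 = 1 + s^+2 * c^+2 by rewrite sqr_sqrtr //; lra.
have hk : k^+2 = 1 + s^+2 by rewrite sqr_sqrtr //; lra.
have hrk : Num.sqrt (r^+2 + (s^+2)^+2) = k.
  by rewrite /k hr; congr Num.sqrt; rewrite (_ : c^+2 = 1 - s^+2); [ring | lra].
have hrk' : Num.sqrt (r^+2 + (- s^+2)^+2) = k by rewrite sqrrN.
have B1 : forall g d, r * RE (fA A (g *: u1 + d *: u2)) + s^+2 * IM (fA A (g *: u1 + d *: u2))
   <= k * w * RE (cinner (g *: u1 + d *: u2) (g *: u1 + d *: u2)).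
  move=> g d; apply: (le_trans (lin_sqrt _ _ _ _)); rewrite hrk -cabsE -mulrA.
  by apply: ler_wpM2l; [exact: ltW | exact: hw].
have B2 : forall g d, r * RE (fA A (g *: u1 + d *: u2)) - s^+2 * IM (fA A (g *: u1 + d *: u2))
   <= k * w * RE (cinner (g *: u1 + d *: u2) (g *: u1 + d *: u2)).
  move=> g d; rewrite -mulNr; apply: (le_trans (lin_sqrt _ _ _ _)); rewrite hrk' -cabsE -mulrA.
  by apply: ler_wpM2l; [exact: ltW | exact: hw].
have B3 : forall v, 0 <= s * RE (fA A v) - c * IM (fA A v).
  move=> v; rewrite subr_ge0; exact: le_trans (ler_wpM2l (ltW c0) (ler_norm _)) (hsec v).
have B4 : forall v, 0 <= s * RE (fA A v) + c * IM (fA A v).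
  move=> v; have h := ler_norm (- IM (fA A v)); rewrite normrN in h.
  rewrite -(opprK (c * _)) subr_ge0 -mulrN; exact: le_trans (ler_wpM2l (ltW c0) h) (hsec v).
have H1 := B1 (Complex k 0) (Complex 0 1).
have H2 := B2 (Complex k 0) (Complex 0 (-1)).
have H3 := B3 ((Complex (k * r) 0) *: u1 + (Complex 1 (s * c)) *: u2).
have H4 := B4 ((Complex (k * r) 0) *: u1 + (Complex 1 (- (s * c))) *: u2).
rewrite fA_exp in H1.
rewrite nv_exp in H1.
rewrite NQ_spec ?cinner_re // in H1.
rewrite ReQ_spec ImQ_spec in H1.
rewrite /= in H1.
rewrite fA_exp nv_exp NQ_spec ?cinner_re // ReQ_spec ImQ_spec /= in H2.
rewrite fA_exp ReQ_spec ImQ_spec /= in H3.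
rewrite fA_exp ReQ_spec ImQ_spec /= in H4.
exact: (key_real s0 r0 k0 hsc hk hr H1 H2 H3 H4).
Qed.

Lemma ReCM (a : R) (z : C) : RE (a%:C%C * z) = a * RE z.
Proof. by rewrite ReM /= mul0r subr0. Qed.
Lemma ImCM (a : R) (z : C) : IM (a%:C%C * z) = a * IM z.
Proof. by rewrite ImM /= mul0r addr0. Qed.
Lemma cabsCM (a : R) (z : C) : cabs (a%:C%C * z) = `|a| * cabs z.
Proof.
by rewrite !cabsE ReCM ImCM !exprMn -mulrDr sqrtrM ?sqr_ge0 // sqrtr_sqr.
Qed.
Lemma cabs_ge0 (z : C) : 0 <= cabs z.
Proof. by rewrite cabsE sqrtr_ge0. Qed.

Lemma cinner0l n (v : 'cV[C]_n) : cinner 0 v = 0.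
Proof. by rewrite /cinner big1 // => i _; rewrite mxE mul0r. Qed.
Lemma cinner0r n (v : 'cV[C]_n) : cinner v 0 = 0.
Proof. by rewrite cinnerC cinner0l conjc0. Qed.

Lemma cinner_eq0 n (u : 'cV[C]_n) : cinner u u = 0 -> u = 0.
Proof.
move=> h; apply/matrixP => i j; rewrite ord1 [RHS]mxE.
have := psumr_eq0P (P := predT) (fun i _ => mulcJ_ge0 (u i 0)) h (i := i) isT.
move/eqP; rewrite mulf_eq0 conjc_eq0 orbb => /eqP //.
Qed.

Lemma cinner_real n (u : 'cV[C]_n) : cinner u u = (RE (cinner u u))%:C%C.
Proof. by have := cinner_re u; case: (cinner u u) => a b /= ->. Qed.

Lemma RE_nv_ge0 n (u : 'cV[C]_n) : 0 <= RE (cinner u u).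
Proof. by have := cinner_ge0 u; rewrite lecE => /andP[_]. Qed.

Lemma RE_nv_eq0 n (u : 'cV[C]_n) : RE (cinner u u) = 0 -> u = 0.
Proof. by move=> h; apply: cinner_eq0; rewrite cinner_real h. Qed.

Lemma homog n (A : 'M[C]_n) v : 0 < RE (cinner v v) ->
  exists x, unit_vec x /\ fA A v = (RE (cinner v v))%:C%C * fA A x.
Proof.
move=> N0; set N := RE _ in N0 *.
pose l := (Num.sqrt N)^-1.
have hl : l * l * N = 1.
  by rewrite /l -invfM -expr2 sqr_sqrtr ?ltW // mulVf // gt_eqF.
exists (l%:C%C *: v); split.
  rewrite /unit_vec cinnerZl cinnerZr conjc_real cinner_real -/N.
  by rewrite -!rmorphM mulrA hl.
rewrite /fA -scalemxAr cinnerZl cinnerZr conjc_real !mulrA -!rmorphM.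
by rewrite (_ : N * l * l = 1) ?mul1r // -hl; ring.
Qed.

Lemma derived n (A : 'M[C]_n) (s c w : R) : 0 <= w -> 0 <= s ->
  (forall x, unit_vec x -> cabs (fA A x) <= w) ->
  (forall x, unit_vec x -> 0 <= RE (fA A x) /\ c * `|IM (fA A x)| <= s * RE (fA A x)) ->
  forall v, [/\ 0 <= RE (fA A v), c * `|IM (fA A v)| <= s * RE (fA A v)
              & cabs (fA A v) <= w * RE (cinner v v)].
Proof.
move=> w0 s0 hu hs v.
have [N0|hle] := ltP 0 (RE (cinner v v)); last first.
  have : RE (cinner v v) = 0 by apply/le_anti; rewrite hle RE_nv_ge0.
  move/RE_nv_eq0 => ->.
  rewrite /fA mulmx0 !cinner0l (_ : RE 0 = 0) // (_ : IM 0 = 0) // normr0 !mulr0.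
  by rewrite cabsE (_ : RE 0 = 0) // (_ : IM 0 = 0) // expr0n /= addr0 sqrtr0.
case: (homog A N0) => x [ux ->]; set N := RE _ in N0 *.
case: (hs x ux) => h1 h2.
rewrite ReCM ImCM cabsCM normrM !(ger0_norm (ltW N0)); split.
- exact: mulr_ge0 (ltW N0) h1.
- by rewrite mulrCA [X in _ <= X]mulrCA ler_pM2l.
- by rewrite [w * N]mulrC ler_pM2l // hu.
Qed.

Lemma conjcM (x y : C) : conjc (x * y) = conjc x * conjc y. Proof. exact: rmorphM. Qed.
Lemma conjcN (x : C) : conjc (- x) = - conjc x. Proof. exact: rmorphN. Qed.
Lemma cabs0 : cabs (0 : C) = 0.
Proof. by rewrite cabsE (_ : RE 0 = 0) // (_ : IM 0 = 0) // expr0n /= addr0 sqrtr0. Qed.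

Lemma bilin n (A : 'M[C]_n) (s c w : R) :
  0 < s -> 0 < c -> s^+2 + c^+2 = 1 -> 0 <= w ->
  (forall v, c * `|IM (fA A v)| <= s * RE (fA A v)) ->
  (forall v, cabs (fA A v) <= w * RE (cinner v v)) ->
  forall x y, cabs (cinner (A *m x) y) <=
    Num.sqrt (1 + s^+2) * w * Num.sqrt (RE (cinner x x)) * Num.sqrt (RE (cinner y y)).
Proof.
move=> s0 c0 hsc w0 hsec hw x y.
have rhs0 : 0 <= Num.sqrt (1 + s^+2) * w * Num.sqrt (RE (cinner x x)) * Num.sqrt (RE (cinner y y)).
  by rewrite !mulr_ge0 ?sqrtr_ge0.
have [X0|hX] := ltP 0 (RE (cinner x x)); last first.
  have -> : x = 0 by apply: RE_nv_eq0; apply/le_anti; rewrite hX RE_nv_ge0.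
  by rewrite mulmx0 cinner0l cabs0 !mulr_ge0 ?sqrtr_ge0.
have [Y0|hY] := ltP 0 (RE (cinner y y)); last first.
  have -> : y = 0 by apply: RE_nv_eq0; apply/le_anti; rewrite hY RE_nv_ge0.
  by rewrite cinner0r cabs0 !mulr_ge0 ?sqrtr_ge0.
move: rhs0 X0 Y0.
set z := cinner (A *m x) y; set X := RE (cinner x x); set Y := RE (cinner y y).
move=> rhs0 X0 Y0.
have [m0|hm] := ltP 0 (cabs z); last by rewrite (le_trans hm rhs0).
set m := cabs z in m0 *.
pose th := z * (m^-1)%:C%C.
have zz : z * conjc z = (m^+2)%:C%C by rewrite -sqr_normc normE rmorphXn.
have hth1 : conjc th * z = m%:C%C.
  have -> : conjc th * z = (z * conjc z) * (m^-1)%:C%C by rewrite /th conjcM conjc_real; ring.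
  by rewrite zz -rmorphM; congr (_%:C%C); field; rewrite gt_eqF.
have hth2 : th * conjc th = 1.
  have -> : th * conjc th = (z * conjc z) * (m^-1)%:C%C * (m^-1)%:C%C by rewrite /th conjcM conjc_real; ring.
  by rewrite zz -!rmorphM (_ : m ^+ 2 * m^-1 * m^-1 = 1) //; field; rewrite gt_eqF.
have K : forall l, 0 <= (1 + s^+2) * w * (l * (l * X)) + w * Y - 2 * (l * m).
  move=> l; have := key s0 c0 hsc hsec hw (l%:C%C *: x) ((- th) *: y).
  have -> : cinner (l%:C%C *: x) (l%:C%C *: x) = (l * (l * X))%:C%C.
    by rewrite cinnerZl cinnerZr conjc_real cinner_real -/X -!rmorphM.
  have -> : cinner ((- th) *: y) ((- th) *: y) = Y%:C%C.
    rewrite cinnerZl cinnerZr cinner_real -/Y conjcN.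
    by rewrite !mulNr mulrN opprK mulrA hth2 mul1r.
  have -> : cinner (A *m (l%:C%C *: x)) ((- th) *: y) = (- (l * m))%:C%C.
    rewrite -scalemxAr cinnerZl cinnerZr -/z conjcN mulNr mulrN hth1.
    by rewrite -rmorphM -rmorphN.
  by rewrite /= mulrN.
pose a := Num.sqrt X; pose b := Num.sqrt Y; pose k := Num.sqrt (1 + s^+2).
have a0 : 0 < a by rewrite sqrtr_gt0.
have b0 : 0 < b by rewrite sqrtr_gt0.
have k0 : 0 < k by rewrite sqrtr_gt0; have := sqr_ge0 s; lra.
have hX : a^+2 = X by rewrite sqr_sqrtr // ltW.
have hY : b^+2 = Y by rewrite sqr_sqrtr // ltW.
have hk : k^+2 = 1 + s^+2 by rewrite sqr_sqrtr //; have := sqr_ge0 s; lra.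
rewrite -/a -/b -/k.
have [w00|wpos] := eqVneq w 0.
  by have := K 1; rewrite w00; lra.
have w1 : 0 < w by rewrite lt_def wpos w0.
pose l := b / (k * a).
have l0 : 0 < l by rewrite divr_gt0 // mulr_gt0.
have e1 : (1 + s^+2) * w * (l * (l * X)) = w * Y.
  by rewrite -hk -hX -hY /l; field; rewrite !gt_eqF.
have := K l; rewrite e1 => hK.
have hlm : l * m <= w * Y by lra.
have e2 : l * (k * a) = b by rewrite /l divfK // mulf_neq0 // gt_eqF.
rewrite -(ler_pM2l b0) -{1}e2.
have -> : l * (k * a) * m = k * a * (l * m) by ring.
apply: le_trans (ler_wpM2l (ltW (mulr_gt0 k0 a0)) hlm) _.
by rewrite -hY le_eqVlt; apply/orP; left; apply/eqP; ring.
Qed.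

Lemma limit_le (m W : R) : 0 <= W ->
  (forall t, 0 < t -> t < 1 -> m <= Num.sqrt (1 + t^+2) * W) -> m <= W.
Proof.
move=> W0 h; rewrite leNgt; apply/negP => mW.
pose d := m - W.
have d0 : 0 < d by rewrite subr_gt0.
pose t := d / (d + 2 * (W + 1)).
have den : 0 < d + 2 * (W + 1) by lra.
have t0 : 0 < t by rewrite divr_gt0.
have t1 : t < 1 by rewrite ltr_pdivrMr // mul1r; lra.
have ht : t * (d + 2 * (W + 1)) = d by rewrite /t divfK // gt_eqF.
have t2 : 0 <= t^+2 by rewrite sqr_ge0.
have hs : Num.sqrt (1 + t^+2) <= 1 + t^+2.
  have e : 1 + t^+2 = Num.sqrt ((1 + t^+2)^+2) by rewrite sqrtr_sqr ger0_norm //; lra.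
  rewrite {2}e; apply: ler_wsqrtr.
  have : 0 <= (1 + t^+2) * t^+2 by rewrite mulr_ge0 //; lra.
  by rewrite mulrDl mul1r expr2 => hh; rewrite -expr2; nra.
have tW : 0 <= t * W by rewrite mulr_ge0 // ltW.
have td : 0 <= t * d by rewrite mulr_ge0 // ltW.
have h2 : t^+2 * W <= t * W.
  by rewrite expr2 -mulrA ler_piMl // ltW.
have := h t t0 t1.
have := ler_wpM2r W0 hs.
rewrite /d in ht td d0; lra.
Qed.

Lemma bilin0 n (A : 'M[C]_n) (w : R) : 0 <= w ->
  (forall v, IM (fA A v) = 0 /\ 0 <= RE (fA A v)) ->
  (forall v, cabs (fA A v) <= w * RE (cinner v v)) ->
  forall x y, cabs (cinner (A *m x) y) <=
    w * Num.sqrt (RE (cinner x x)) * Num.sqrt (RE (cinner y y)).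
Proof.
move=> w0 hre hw x y; apply: limit_le; first by rewrite !mulr_ge0 ?sqrtr_ge0.
move=> t t0 t1.
have c0 : 0 < 1 - t^+2 by nra.
have c1 : 0 < Num.sqrt (1 - t^+2) by rewrite sqrtr_gt0.
have c2 : t^+2 + Num.sqrt (1 - t^+2) ^+ 2 = 1 by rewrite sqr_sqrtr ?ltW //; lra.
have c3 : forall v, Num.sqrt (1 - t^+2) * `|IM (fA A v)| <= t * RE (fA A v).
  by move=> v; case: (hre v) => -> h; rewrite normr0 mulr0 mulr_ge0 // ltW.
have := @bilin n A t (Num.sqrt (1 - t^+2)) w t0 c1 c2 w0 c3 hw x y.
by rewrite !mulrA.
Qed.

Lemma cabsD (a b : C) : cabs (a + b) <= cabs a + cabs b.
Proof. exact: le_normcD. Qed.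
Lemma cabsM (a b : C) : cabs (a * b) = cabs a * cabs b.
Proof. exact: ComplexField.Normc.normcM. Qed.

Lemma sup_le_gen (E : set R) (B : R) : 0 <= B -> (forall r, E r -> r <= B) -> sup E <= B.
Proof.
move=> B0 hB.
have [ne|e0] := pselect (exists r, E r); first exact: ge_sup ne hB.
rewrite (_ : E = set0) ?sup0 //.
apply/funext => r; apply/propext; split => [Er|[]].
by exfalso; apply: e0; exists r.
Qed.

Lemma nv_u n (x y : 'cV[C]_n) (q : C) : unit_vec x -> unit_vec y -> cinner x y = q ->
  RE (cinner (y - conjc q *: x) (y - conjc q *: x)) = 1 - cabs q ^+ 2.
Proof.
move=> ux uy hq.
have -> : y - conjc q *: x = 1 *: y + (- conjc q) *: x by rewrite scale1r scaleNr.
rewrite nv_exp [cinner y x]cinnerC hq ux uy conjcN conjcK conjc1.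
rewrite (_ : _ + _ = 1 - q * conjc q); last by ring.
rewrite ReD ReN ReM ReJ ImJ cabsE sqr_sqrtr ?addr_ge0 ?sqr_ge0 //= .
by rewrite !expr2; ring.
Qed.

Lemma fA_bound n (A : 'M[C]_n) x : unit_vec x ->
  cabs (fA A x) <= \sum_i \sum_j cabs (A i j).
Proof.
move=> ux.
have hxi : forall i, `|x i 0| <= 1.
  move=> i; rewrite -(@expr_le1 _ 2) // sqr_normc -[X in _ <= X]ux /cinner.
  rewrite (bigD1 i) //= lerDl sumr_ge0 // => j _; exact: mulcJ_ge0.
suff : `|fA A x| <= (\sum_i \sum_j cabs (A i j))%:C%C by rewrite normE lecR.
rewrite rmorph_sum /fA /cinner.
apply: le_trans (ler_norm_sum _ _ _) _; apply: ler_sum => i _.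
rewrite normrM mxE rmorph_sum -[X in _ <= X]mulr1.
apply: ler_pM => //; last by rewrite normcJ.
apply: le_trans (ler_norm_sum _ _ _) _; apply: ler_sum => j _.
by rewrite normrM -[X in _ <= X]mulr1; apply: ler_pM.
Qed.
End S.

Unset Implicit Arguments.

Theorem theorem2p14 (R : realType) (n : nat) (alpha : R) (A : 'M[R[i]]_n) (q : R[i]) :
  0 <= alpha -> alpha < pi / 2 ->
  sectorial alpha A ->
  cabs q <= 1 ->
  qnumradius q A <=
    (Num.sqrt ((1 - cabs q ^+ 2) * (1 + 2 * sin alpha ^+ 2)) + cabs q) * numradius A
  /\
  qnumradius q A <= Num.sqrt (1 + sin alpha ^+ 2) * numradius A.
Proof.
move=> a0 api hsec hq.
have pi0 := @pi_gt0 R.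
have c0 : 0 < cos alpha by apply: cos_gt0_pihalf; apply/andP; split; lra.
have s0 : 0 <= sin alpha by apply: sin_ge0_pi; apply/andP; split; lra.
have hsc : sin alpha ^+ 2 + cos alpha ^+ 2 = 1 by rewrite addrC cos2Dsin2.
have htan : tan alpha = sin alpha / cos alpha by [].
set s := sin alpha in s0 hsc htan *; set c := cos alpha in c0 hsc htan *.
set w := numradius A.
have hub : classical_sets.has_ubound [set r | exists2 z, numrange A z & r = cabs z].
  exists (\sum_i \sum_j cabs (A i j)) => r [z [x [ux ->]] ->]; exact: fA_bound.
have hu : forall x, unit_vec x -> cabs (fA A x) <= w.
  move=> x ux; apply: (ub_le_sup hub); exists (fA A x) => //; by exists x.
have w0 : 0 <= w.
  have [[x ux]|nox] := pselect (exists x : 'cV[R[i]]_n, unit_vec x).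
    exact: le_trans (cabs_ge0 _) (hu x ux).
  rewrite /w /numradius; set E := (X in sup X); rewrite (_ : E = classical_sets.set0) ?sup0 //.
  apply/funext => r; apply/propext; split => [[z [x [ux _]] _]|[]].
  by exfalso; apply: nox; exists x.
have hs : forall x, unit_vec x -> 0 <= complex.Re (fA A x) /\
    c * `|complex.Im (fA A x)| <= s * complex.Re (fA A x).
  move=> x ux; have [h1 h2] : sector alpha (fA A x) by apply: hsec; exists x.
  split; first exact: ltW.
  have := ler_wpM2l (ltW c0) h2; rewrite htan mulrA (mulrC c (s / c)) divfK // gt_eqF //.
have hd := derived w0 s0 hu hs.
have hbil : forall x y, cabs (cinner (A *m x) y) <= Num.sqrt (1 + s^+2) * w *
    Num.sqrt (complex.Re (cinner x x)) * Num.sqrt (complex.Re (cinner y y)).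
  have [sp|s00] := ltP 0 s.
    by apply: (bilin sp c0 hsc w0) => v; case: (hd v).
  have s00' : s = 0 by apply/le_anti; rewrite s00 s0.
  rewrite s00' expr0n /= addr0 sqrtr1 mul1r.
  apply: bilin0 w0 _ _; last by move=> v; case: (hd v).
  move=> v; case: (hd v) => h1 h2 _; split => //.
  rewrite s00' mul0r in h2.
  have : `|complex.Im (fA A v)| <= 0 by rewrite -(ler_pM2l c0) mulr0.
  by rewrite normr_le0 => /eqP.
have hq0 := cabs_ge0 q.
split; apply: sup_le_gen.
- by rewrite mulr_ge0 // addr_ge0 ?sqrtr_ge0.
- move=> r [x [y [ux uy hxy ->]]].
  have E : cinner (A *m x) y = q * fA A x + cinner (A *m x) (y - conjc q *: x).
    by rewrite /fA -{1}(conjcK q) -cinnerZr -cinnerDr [_ + (y - _)]addrC subrK.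
  rewrite E; apply: le_trans (cabsD _ _) _; rewrite cabsM.
  have h1 := ler_wpM2l hq0 (hu x ux).
  have h2 := hbil x (y - conjc q *: x).
  rewrite nv_u // ux (_ : complex.Re 1 = 1) // sqrtr1 mulr1 in h2.
  have h3 : Num.sqrt (1 + s^+2) * w * Num.sqrt (1 - cabs q ^+ 2)
      <= Num.sqrt ((1 - cabs q ^+ 2) * (1 + 2 * s ^+ 2)) * w.
    rewrite mulrAC -sqrtrM; last by have := sqr_ge0 s; lra.
    apply: (ler_pM (sqrtr_ge0 _) w0 _ (lexx w)); apply: ler_wsqrtr.
    have q2 : cabs q ^+ 2 <= 1 by rewrite -(@expr_le1 _ 2) in hq.
    have := sqr_ge0 s; nra.
  by rewrite mulrDl; lra.
- by rewrite mulr_ge0 // sqrtr_ge0.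
- move=> r [x [y [ux uy hxy ->]]].
  by have := hbil x y; rewrite ux uy (_ : complex.Re 1 = 1) // sqrtr1 !mulr1.
Qed.
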